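(* Let $G$ be a finite group and $N\lhd G$ such that $G/N$ is a cyclic $p$-group, and let $\chi$ be a $p$-vanishing character of $G$. Then: (a) $\chi=\psi^G$ for some character $\psi$ of $N$; and for any character $\psi$ of $N$ with $\psi^G=\chi$: (b) if $h\in N$ has order divisible by $p$ and the $G$-conjugacy class of $h$ coincides with its $N$-conjugacy class, then $\psi(h)=0$; (c) if $\psi$ is $G$-invariant then $\psi$ is $p$-vanishing.
   Context: A character is $p$-vanishing if it vanishes on every element of order divisible by $p$. $\psi^G$ denotes the induced character. *)

(* Defs.v *)
From HB Require Import structures.
From mathcomp Require Import all_boot all_order all_algebra all_fingroup all_solvable all_field all_character.
Set Implicit Arguments. Unset Strict Implicit. Unset Printing Implicit Defensive.
Import GRing.Theory Num.Theory.
Local Open Scope ring_scope.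

Definition p_vanishing (gT : finGroupType) (G : {group gT}) (p : nat)
  (chi : 'CF(G)) : Prop :=
  forall g, g \in G -> (p %| #[g]%g)%N -> chi g = 0.

(* Main.v *)
Require Import Defs.
From HB Require Import structures.
From mathcomp Require Import all_boot all_order all_algebra all_fingroup all_solvable all_field all_character.
Set Implicit Arguments. Unset Strict Implicit. Unset Printing Implicit Defensive.
Import GRing.Theory Num.Theory.

Section Helpers.
Local Open Scope ring_scope.

Definition mpow (d : nat) (A : 'M[algC]_d) (i : nat) := iter i (mulmx A) 1%:M.

Lemma mpowS d (A : 'M[algC]_d) i : mpow A i.+1 = A *m mpow A i.
Proof. by []. Qed.

Lemma mpowD d (A : 'M[algC]_d) i j : mpow A (i + j) = mpow A i *m mpow A j.
Proof.
elim: i => [|i IH]; first by rewrite add0n /= mul1mx.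
by rewrite addSn !mpowS IH mulmxA.
Qed.

Lemma mpowZ d (A : 'M[algC]_d) (w : algC) i : mpow (w *: A) i = w ^+ i *: mpow A i.
Proof.
elim: i => [|i IH]; first by rewrite expr0 scale1r.
by rewrite !mpowS IH -scalemxAl -scalemxAr scalerA exprS.
Qed.

Lemma mpowSr d (A : 'M[algC]_d) i : mpow A i.+1 = mpow A i *m A.
Proof. by rewrite -addn1 mpowD /= mulmx1. Qed.

Lemma cyclic_ext_repr (gT : finGroupType) (G N : {group gT}) n
  (X : mx_representation algC N n) :
  (N <| G)%g -> cyclic (G / N)%g -> mx_irreducible X ->
  G \subset 'I[cfRepr X]%g ->
  exists Y : mx_representation algC G n, {in N, forall x, Y x = X x}.
Proof.
move=> nsNG cycGN irrX IGt.
have [sNG nNG] := andP nsNG.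
have [gb defGb] := cyclicP cycGN.
have: gb \in (G / N)%g by rewrite defGb cycle_id.
case/morphimP => g nNg Gg Dgb.
pose k := #[gb]%g.
have k_gt0 : (0 < k)%N := order_gt0 gb.
have absX := groupC irrX.
have [d_gt0 _] := (mx_irrP _).1 irrX.
have nNgV : (g^-1 \in 'N(N))%g by rewrite groupV.
have Xg_repr : mx_repr N (fun x => X (x ^ g^-1)%g).
  split; first by rewrite conj1g repr_mx1.
  by move=> x y Nx Ny /=; rewrite conjMg repr_mxM // memJ_norm.
have: cfRepr (MxRepresentation Xg_repr) == cfRepr X.
  apply/eqP/cfun_inP => x Nx.
  have := congr1 (fun f : 'CF(N) => f x) (inertiaJ (subsetP IGt g Gg)).
  by rewrite /= cfConjgE // !cfunE memJ_norm // Nx.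
case/cfRepr_rsimP => B _ freeB defB.
have uB : B \in unitmx by rewrite -row_free_unit.
have {}defB : forall x, x \in N -> X (x ^ g^-1)%g *m B = B *m X x by [].
have R2 : forall i x, x \in N -> X (x ^ (g^-1 ^+ i))%g *m mpow B i = mpow B i *m X x.
  elim=> [|i IH] x Nx; first by rewrite expg0 conjg1 /= mulmx1 mul1mx.
  rewrite expgSr conjgM mpowS mulmxA defB ?memJ_norm ?groupX //.
  by rewrite -!mulmxA IH.
pose z := (g ^+ k)%g.
have Nz : z \in N.
  by apply: coset_idr; rewrite ?groupX // morphX // -Dgb expg_order.
have nNz : z \in 'N(N)%g by rewrite (subsetP (normG N)).
pose C := X (z^-1)%g *m mpow B k.
have cC : centgmx X C.
  apply/centgmxP => x Nx.
  have := R2 k x Nx; rewrite expgVn -/z conjgE invgK => h.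
  rewrite /C -mulmxA -h mulmxA -repr_mxM ?groupM ?groupV // mulKg.
  by rewrite repr_mxM ?groupV // mulmxA.
have mpow_unit : forall i, mpow B i \in unitmx.
  by elim=> [|i IH]; rewrite ?unitmx1 // mpowS unitmx_mul uB.
have [c Dc] := is_scalar_mxP (mx_abs_irr_cent_scalar absX cC).
have nz_c : c != 0.
  apply: contraTneq (_ : C \in unitmx) => [c0|]; last first.
    by rewrite unitmx_mul repr_mx_unit ?groupV // mpow_unit.
  rewrite Dc c0 unitmxE det_scalar expr0n eqn0Ngt d_gt0 /=.
  by rewrite unitr0.
pose om := k.-root c^-1.
have hw : om ^+ k = c^-1 by rewrite rootCK.
pose A := om *: B.
have R2A : forall i x, x \in N -> X (x ^ (g^-1 ^+ i))%g *m mpow A i = mpow A i *m X x.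
  by move=> i x Nx; rewrite /A mpowZ -scalemxAr -scalemxAl R2.
have hAk : mpow A k = X z.
  have h1 : X (z^-1)%g *m mpow A k = 1%:M.
    by rewrite /A mpowZ -scalemxAr -/C Dc hw scale_scalar_mx mulVf.
  rewrite -[mpow A k]mul1mx -(repr_mx1 X) -(mulgV z) repr_mxM ?groupV //.
  by rewrite -mulmxA h1 mulmx1.
pose idx x := find (fun i => coset N x == gb ^+ i)%g (iota 0 k).
have idxP : forall x, x \in G -> coset N x = (gb ^+ idx x)%g.
  move=> x Gx; have: coset N x \in <[gb]>%g by rewrite -defGb mem_quotient.
  case/cycleP => i Di.
  have hP : has (fun i => coset N x == gb ^+ i)%g (iota 0 k).
    apply/hasP; exists (i %% k)%N; first by rewrite mem_iota add0n ltn_mod k_gt0.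
    by rewrite expg_mod_order Di.
  have := nth_find 0%N hP; rewrite nth_iota ?add0n; first by move/eqP.
  by rewrite -[k in (_ < k)%N](size_iota 0) -has_find.
have MEM : forall m j w, w \in G -> coset N w = (gb ^+ m)%g -> j = m %[mod k] ->
    ((g ^+ j)^-1 * w)%g \in N.
  move=> m j w Gw Dw jm; apply: coset_idr.
    by rewrite groupM ?groupV ?groupX // (subsetP nNG).
  rewrite morphM ?morphV ?morphX ?groupV ?groupX ?(subsetP nNG) // -Dgb (Dw : coset_morphism N w = _).
  by move/eqP: jm; rewrite -eq_expg_mod_order => /eqP->; rewrite mulVg.
have PER : forall j w, ((g ^+ j)^-1 * w)%g \in N ->
    mpow A (j + k) *m X ((g ^+ (j + k))^-1 * w)%g = mpow A j *m X ((g ^+ j)^-1 * w)%g.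
  move=> j w Nj; rewrite mpowD hAk expgD invMg -/z -mulgA repr_mxM ?groupV //.
  by rewrite mulmxA -(mulmxA _ (X z)) -repr_mxM ?groupV // mulgV repr_mx1 mulmx1.
pose Y x := mpow A (idx x) *m X ((g ^+ idx x)^-1 * x)%g.
have F : forall m w, w \in G -> coset N w = (gb ^+ m)%g ->
    mpow A m *m X ((g ^+ m)^-1 * w)%g = Y w.
  move=> m w Gw Dw.
  have base : forall q, mpow A (m %% k + q * k) *m X ((g ^+ (m %% k + q * k))^-1 * w)%g
      = mpow A (m %% k) *m X ((g ^+ (m %% k))^-1 * w)%g.
    elim=> [|q IH]; first by rewrite mul0n addn0.
    rewrite mulSn addnCA addnC PER ?IH //; apply: (MEM m) => //.
    by rewrite addnC modnMDl modn_mod.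
  have im : idx w = m %[mod k].
    by apply/eqP; rewrite -eq_expg_mod_order -idxP // Dw.
  rewrite /Y {1 2}(divn_eq m k) addnC base.
  by rewrite {1 2}(divn_eq (idx w) k) addnC im base.
have YN : {in N, forall x, Y x = X x}.
  move=> x Nx; rewrite -(F 0%N) ?(subsetP sNG) ?coset_id //.
  by rewrite expg0 invg1 mul1g /= mul1mx.
have Ycomm : forall j y, y \in N -> X y *m mpow A j = mpow A j *m X (y ^ (g ^+ j))%g.
  move=> j y Ny; rewrite -R2A ?memJ_norm ?groupX //.
  by rewrite expgVn conjgK.
have Yrepr : mx_repr G Y.
  split.
    by rewrite -(F 0%N) ?morph1 // expg0 invg1 mulg1 repr_mx1 /= mul1mx.
  move=> x y Gx Gy /=.
  have Nx : ((g ^+ idx x)^-1 * x)%g \in N by apply: (MEM (idx x)); rewrite ?idxP.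
  have Ny : ((g ^+ idx y)^-1 * y)%g \in N by apply: (MEM (idx y)); rewrite ?idxP.
  rewrite -(F (idx x + idx y)%N) ?groupM //; last first.
    by rewrite morphM ?(subsetP nNG) // (idxP x Gx : coset_morphism N x = _) (idxP y Gy : coset_morphism N y = _) expgD.
  rewrite /Y -mulmxA (mulmxA (X _)) Ycomm // mpowD -!mulmxA.
  rewrite -repr_mxM ?memJ_norm ?groupX //; congr (_ *m (_ *m X _)).
  by rewrite conjgE !mulgA mulgK expgD invMg.
exists (MxRepresentation Yrepr) => x Nx /=; exact: YN.
Qed.

Lemma cyclic_ext (gT : finGroupType) (G N : {group gT}) (t : Iirr N) :
  (N <| G)%g -> cyclic (G / N)%g -> G \subset 'I['chi_t]%g ->
  exists c : Iirr G, 'Res[N] 'chi_c = 'chi_t.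
Proof.
move=> nsNG cycGN IGt.
have IGt' : (G \subset 'I[cfRepr 'Chi_t])%g by rewrite irrRepr.
have [Y YX] := cyclic_ext_repr nsNG cycGN (socle_irr _) IGt'.
have sNG := normal_sub nsNG.
have resY : 'Res[N] (cfRepr Y) = 'chi_t.
  apply/cfun_inP => x Nx; rewrite cfResE // -irrRepr !cfunE Nx.
  by rewrite (subsetP sNG) // YX.
have /irrP[c Dc] : cfRepr Y \in irr G.
  apply: (@cfRes_irr_irr _ G N); first exact: cfRepr_char.
  by rewrite resY mem_irr.
by exists c; rewrite -Dc.
Qed.

Lemma cfdot_Res_on (gT : finGroupType) (T N : {group gT}) (xi phi : 'CF(T)) :
  (N \subset T)%g -> xi \in 'CF(T, N) ->
  '['Res[N] xi, 'Res[N] phi] = (#|T : N|%g)%:R * '[xi, phi].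
Proof.
move=> sNT xiN; rewrite !cfdotE [\sum_(x in T) _](big_setID N) /= (setIidPr sNT).
rewrite [X in _ + X]big1 ?addr0 => [|x /setDP[_ Nx]]; last first.
  by rewrite (cfun_on0 xiN Nx) mul0r.
rewrite natf_indexg // mulrCA mulrA mulKf ?neq0CG //; congr (_ * _).
by apply: eq_bigr => x Nx; rewrite !cfResE.
Qed.

Lemma div_constt (gT : finGroupType) (G N : {group gT}) (chi : 'CF(G)) (s : Iirr N) :
  (N <| G)%g -> cyclic (G / N)%g -> chi \is a character -> chi \in 'CF(G, N) ->
  exists b : nat, '['Res[N] chi, 'chi_s] = (#|'I_G['chi_s] : N|%g * b)%:R.
Proof.
move=> nsNG cycGN Nchi chiN.
have sNG := normal_sub nsNG.
pose T := ('I_G['chi_s])%G.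
have nsNT : (N <| T)%g by apply: normal_Inertia.
have sNT := normal_sub nsNT.
have sTG : (T \subset G)%g by apply: subsetIl.
have cycTN : cyclic (T / N)%g by apply: cyclicS cycGN; apply: quotientS.
have [c Dc] := cyclic_ext nsNT cycTN (subsetIr _ _).
have xiN : 'Res[T] chi \in 'CF(T, N).
  apply/cfun_onP => x Nx; have [Tx|Tx] := boolP (x \in T).
    by rewrite cfResE // (cfun_on0 chiN Nx).
  by rewrite cfun0.
have /natrP[b Db] : '['Res[T] chi, 'chi_c] \in Num.nat.
  by rewrite Cnat_cfdot_char ?cfRes_char ?irr_char.
by exists b; rewrite natrM -(cfResRes chi sNT sTG) -{1}Dc cfdot_Res_on // Db.
Qed.

Lemma res_ind_exists (gT : finGroupType) (G N : {group gT}) :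
  (N <| G)%g -> forall m (phi : 'CF(N)),
  (Num.truncn (phi 1%g) <= m)%N -> phi \is a character ->
  (forall y, y \in G -> (phi ^ y)%CF = phi) ->
  (forall s : Iirr N, exists b : nat, '[phi, 'chi_s] = (#|'I_G['chi_s] : N|%g * b)%:R) ->
  exists2 psi : 'CF(N), psi \is a character & 'Res[N] ('Ind[G] psi) = phi.
Proof.
move=> nsNG; have [sNG nNG] := andP nsNG.
elim=> [|m IH] phi hm Nphi Iphi Dphi.
  have [->|nz] := eqVneq phi 0; first by exists 0; rewrite ?rpred0 // !linear0.
  have /natrP[n Dn] := Cnat_char1 Nphi.
  move: hm; rewrite Dn natrK leqn0 => /eqP n0.
  by move: nz; rewrite -char1_eq0 // Dn n0 eqxx.
have [->|nz] := eqVneq phi 0; first by exists 0; rewrite ?rpred0 // !linear0.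
have [s Ss] := neq0_has_constt nz.
pose theta := 'chi_s.
pose I := 'I_G[theta]%G.
have sIG : (I \subset G)%g by apply: subsetIl.
have sNI : (N \subset I)%g by apply: sub_Inertia.
have [b Db] := Dphi s.
pose rho := 'Res[N] ('Ind[G] theta).
have rho_th : '[rho, theta] = (#|I : N|%g)%:R.
  rewrite /rho cfResInd // cfdotZl cfdot_suml.
  rewrite (eq_bigr (fun y => ((y \in I) : nat)%:R)); last first.
    by move=> y Gy; rewrite cfdotC (@cfdot_irr_conjg _ G N s y nsNG Gy) conjC_nat.
  rewrite (big_setID I) /= (setIidPr sIG) [X in _ + X]big1 ?addr0; last first.
    by move=> y /setDP[_ /negPf->].
  rewrite (eq_bigr (fun _ => 1)) => [|y ->//]; rewrite sumr_const.
  by rewrite natf_indexg // mulrC.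
have rhoE : forall s', '[rho, 'chi_s'] =
    if 'chi_s' \in (theta ^: G)%CF then (#|I : N|%g)%:R else 0.
  move=> s'; case: ifP => [cl|ncl].
    by rewrite /rho cfdot_Res_l -(cfclass_Ind nsNG cl) -cfdot_Res_l.
  rewrite /rho cfResInd // cfdotZl cfdot_suml big1 ?mulr0 // => y Gy.
  rewrite -conjg_IirrE cfdot_irr; case: eqP => // E.
  by move: ncl; rewrite -E conjg_IirrE; case/negP; apply/cfclassP; exists y.
pose phi' := phi - b%:R *: rho.
have phi'E : forall s', '[phi', 'chi_s'] =
    if 'chi_s' \in (theta ^: G)%CF then 0 else '[phi, 'chi_s'].
  move=> s'; rewrite cfdotBl cfdotZl rhoE; case: ifP => [cl|_]; last first.
    by rewrite mulr0 subr0.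
  have [y Gy ->] := cfclassP _ _ _ cl.
  rewrite -{1}(Iphi y Gy) cfConjg_iso -/theta Db natrM mulrC subrr.
  by [].
have Nphi' : phi' \is a character.
  apply/forallP => j; rewrite coord_cfdot phi'E.
  by case: ifP => _; [exact: rpred0 | exact: Cnat_cfdot_char_irr].
have Iphi' : forall y, y \in G -> (phi' ^ y)%CF = phi'.
  move=> y Gy; rewrite linearB linearZ /= Iphi // /rho.
  by rewrite (@cfConjgRes _ G G N _ y (normal_refl G) nsNG Gy) cfConjg_id.
have Dphi' : forall s' : Iirr N, exists b' : nat,
    '[phi', 'chi_s'] = (#|'I_G['chi_s'] : N|%g * b')%:R.
  move=> s'; rewrite phi'E; case: ifP => _; last exact: Dphi.
  by exists 0%N; rewrite muln0.
have /natrP[a Da] := Cnat_char1 Nphi'.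
have Nrho : rho \is a character by rewrite cfRes_char ?cfInd_char ?irr_char.
have /natrP[r Dr] := Cnat_char1 Nrho.
have r_gt0 : (0 < r)%N.
  rewrite -(ltr0n algC) -Dr /rho cfRes1 cfInd1 // mulr_gt0 ?irr1_gt0 //.
  by rewrite ltr0n indexg_gt0.
have b_gt0 : (0 < b)%N.
  rewrite lt0n; apply/eqP => b0; move: Ss.
  by rewrite irr_consttE Db b0 muln0 eqxx.
have hphi1 : phi 1%g = (a + b * r)%:R.
  by rewrite -[phi](subrK (b%:R *: rho)) cfunE -/phi' Da cfunE Dr -natrM natrD.
have [psi' Npsi' Dpsi'] : exists2 psi' : 'CF(N), psi' \is a character &
    'Res[N] ('Ind[G] psi') = phi'.
  apply: IH => //; rewrite Da natrK.
  move: hm; rewrite hphi1 natrK => hm.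
  rewrite -ltnS; apply: leq_trans hm.
  by rewrite -addn1 leq_add2l muln_gt0 b_gt0 r_gt0.
exists (psi' + b%:R *: theta).
  by rewrite rpredD // scaler_nat rpredMn // irr_char.
by rewrite linearD linearZ /= linearD linearZ /= Dpsi' subrK.
Qed.

Lemma pgroup_notin (gT : finGroupType) (G N : {group gT}) p x :
  prime p -> (N <| G)%g -> (p.-group (G / N))%g -> x \in G -> x \notin N ->
  (p %| #[x]%g)%N.
Proof.
move=> pr nsNG pGN Gx Nx.
have nNx : x \in 'N(N)%g := subsetP (normal_norm nsNG) x Gx.
have ne1 : coset N x != 1%g by apply: contra Nx => /eqP/(coset_idr nNx).
have := mem_p_elt pGN (mem_quotient N Gx).
case/p_natP => e De.
apply: (dvdn_trans _ (morph_order (coset_morphism N) nNx)).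
have e_gt0 : (0 < e)%N.
  rewrite lt0n; apply: contraNneq ne1 => e0.
  by rewrite -order_eq1 De e0.
by rewrite /= De dvdn_exp.
Qed.

Lemma main_aux (gT : finGroupType) (G N : {group gT}) (p : nat) (chi : 'CF(G)) :
  prime p -> (N <| G)%g -> cyclic (G / N)%g -> (p.-group (G / N))%g ->
  chi \is a character -> p_vanishing p chi ->
  [/\ (exists2 psi : 'CF(N), psi \is a character & 'Ind[G] psi = chi),
      (forall psi : 'CF(N), psi \is a character -> 'Ind[G] psi = chi ->
         forall h, h \in N -> (p %| #[h]%g)%N -> (h ^: G = h ^: N)%g -> psi h = 0)
    & (forall psi : 'CF(N), psi \is a character -> 'Ind[G] psi = chi ->
         (forall y, y \in G -> (psi ^ y)%CF = psi) -> p_vanishing p psi)].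
Proof.
move=> pr nsNG cycGN pGN Nchi pv.
have [sNG nNG] := andP nsNG.
have chiN : (chi \in 'CF(G, N))%R.
  apply/cfun_onP => x Nx; have [Gx|Gx] := boolP (x \in G); last by rewrite cfun0.
  by apply: pv => //; apply: (pgroup_notin pr nsNG pGN).
split.
- have Iphi : forall y, y \in G -> ('Res[N] chi ^ y)%CF = 'Res[N] chi.
    by move=> y Gy; rewrite (@cfConjgRes _ G G N chi y (normal_refl G) nsNG Gy) cfConjg_id.
  have Dphi := fun s => div_constt s nsNG cycGN Nchi chiN.
  have [psi Npsi Dpsi] := @res_ind_exists _ G N nsNG _ ('Res[N] chi) (leqnn _)
    (cfRes_char _ Nchi) Iphi Dphi.
  exists psi => //; apply/cfunP => x.
  have [Nx|Nx] := boolP (x \in N).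
    by have := congr1 (fun f : 'CF(N) => f x) Dpsi; rewrite /= !cfResE.
  by rewrite (cfun_on0 (cfInd_normal _ nsNG) Nx) (cfun_on0 chiN Nx).
- move=> psi Npsi Dpsi h Nh ph hGN.
  have Gh := subsetP sNG h Nh.
  have := congr1 (fun f : 'CF(G) => f h) Dpsi; rewrite /= cfIndE // (pv h Gh ph).
  rewrite (eq_bigr (fun _ => psi h)) => [|y Gy]; last first.
    have : (h ^ y)%g \in (h ^: N)%g by rewrite -hGN memJ_class.
    by case/imsetP => n Nn ->; rewrite cfunJ.
  rewrite sumr_const => /eqP; rewrite mulf_eq0 invr_eq0 (negbTE (neq0CG N)) /= mulrn_eq0.
  by case/orP => [/eqP G0|/eqP//]; move: (cardG_gt0 G); rewrite G0.
- move=> psi Npsi Dpsi Ipsi h Nh ph.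
  have Gh := subsetP sNG h Nh.
  have := congr1 (fun f : 'CF(G) => f h) Dpsi; rewrite /= cfIndE // (pv h Gh ph).
  rewrite (eq_bigr (fun _ => psi h)) => [|y Gy]; last first.
    by rewrite -[in RHS](Ipsi (y^-1)%g (groupVr Gy)) cfConjgE ?invgK // groupV (subsetP nNG).
  rewrite sumr_const => /eqP; rewrite mulf_eq0 invr_eq0 (negbTE (neq0CG N)) /= mulrn_eq0.
  by case/orP => [/eqP G0|/eqP//]; move: (cardG_gt0 G); rewrite G0.
Qed.

End Helpers.

Local Open Scope group_scope.

Theorem proposition2p8 (gT : finGroupType) (G N : {group gT}) (p : nat)
  (chi : 'CF(G)) :
  prime p -> N <| G -> cyclic (G / N) -> p.-group (G / N) ->
  chi \is a character -> p_vanishing p chi ->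
  [/\ (exists2 psi : 'CF(N), psi \is a character & ('Ind[G] psi = chi)%R),
      (forall psi : 'CF(N), psi \is a character -> ('Ind[G] psi = chi)%R ->
         forall h, h \in N -> (p %| #[h])%N -> h ^: G = h ^: N -> psi h = 0%R)
    & (forall psi : 'CF(N), psi \is a character -> ('Ind[G] psi = chi)%R ->
         (forall y, y \in G -> (psi ^ y)%CF = psi) -> p_vanishing p psi)].
Proof. exact: main_aux. Qed.
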